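(* Let $P$ be a shortest path (a path of minimum length between its two end vertices) in a honeycomb toroidal graph $\mathrm{HTG}(m,n,\ell)$, and let $0\le i\le m-2$. If $P$ contains two flat edges between column $i$ and column $i+1$ that are consecutive among the flat edges of $P$ between these two columns, then some jump edge of $P$ lies between them along $P$. In particular, if $P$ contains no jump edge, then $P$ contains at most one flat edge between column $i$ and column $i+1$, for each $i$.
   Context: Honeycomb toroidal graph: let $m\ge 1$ be an integer, $n\ge 4$ an even integer, and $\ell$ an integer with $\ell\equiv m \pmod 2$. The graph $\mathrm{HTG}(m,n,\ell)$ has vertex set $\{u_{i,j}: 0\le i\le m-1,\ j\in\mathbb{Z}_n\}$ (second subscripts are taken modulo $n$; the vertices $u_{i,0},\dots,u_{i,n-1}$ form column $i$) and the following edges: vertical edges $u_{i,j}u_{i,j+1}$ for all $0\le i\le m-1$ and all $j$; flat edges $u_{i,j}u_{i+1,j}$ for $0\le i\le m-2$ and all $j$ with $i+j$ odd; jump edges $u_{m-1,j}u_{0,j+\ell}$ for all $j$ with $j\equiv m\pmod 2$. Only parameters for which this is a simple 3-regular graph are allowed (in particular, when $m=1$ one requires $\ell\not\equiv\pm1\pmod n$). *)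

(* Defs.v *)
From mathcomp Require Import all_boot all_order all_algebra.
Set Implicit Arguments. Unset Strict Implicit. Unset Printing Implicit Defensive.
Import Order.TTheory GRing.Theory Num.Theory.

(* Vertex u_{i,j} of HTG(m,n,l) is the pair (i, j) : 'I_m * 'I_n.
   Column index = first component, row index (taken mod n) = second. *)
Definition htg_vertex (m n : nat) := ('I_m * 'I_n)%type.

Section HTG.
Variables (m n : nat) (l : int).
Local Notation V := (htg_vertex m n).

Definition row (x : V) : int := Posz (nat_of_ord x.2).
Definition col (x : V) : nat := nat_of_ord x.1.

Definition vertical_edge (x y : V) : bool :=
  (col x == col y) &&
  ((row y == ((row x + 1) %% Posz n)%Z) || (row x == ((row y + 1) %% Posz n)%Z)).

Definition flat_edge_dir (i : nat) (x y : V) : bool :=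
  [&& col x == i, col y == i.+1, i.+1 < m, row x == row y & odd (i + x.2)].

Definition flat_edge (i : nat) (x y : V) : bool :=
  flat_edge_dir i x y || flat_edge_dir i y x.

Definition jump_edge_dir (x y : V) : bool :=
  [&& col x == m.-1, col y == 0%N, odd x.2 == odd m &
      row y == ((row x + l) %% Posz n)%Z].

Definition jump_edge (x y : V) : bool := jump_edge_dir x y || jump_edge_dir y x.

Definition htg_adj (x y : V) : bool :=
  vertical_edge x y || [exists i : 'I_m, flat_edge i x y] || jump_edge x y.

Definition htg_params : Prop :=
  [/\ (1 <= m)%N, (4 <= n)%N, ~~ odd n, odd `|l|%N = odd m &
      (m = 1%N -> ((l %% Posz n)%Z != 1) && ((l %% Posz n)%Z != (Posz n - 1)%R))].

Definition shortest_path (x : V) (s : seq V) : Prop :=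
  [/\ path htg_adj x s, uniq (x :: s) &
      forall t : seq V, path htg_adj x t -> last x t = last x s ->
        (size s <= size t)%N].

(* The k-th edge of the path x :: s joins its k-th and (k+1)-th vertices. *)
Definition pv (x : V) (s : seq V) (k : nat) : V := nth x (x :: s) k.

End HTG.

(* Main.v *)
Require Import Defs.
From mathcomp Require Import all_boot all_order all_algebra.
From mathcomp Require Import zify.
Set Implicit Arguments. Unset Strict Implicit.

Section H.
Variables (m n : nat) (l : int).
Local Notation V := (htg_vertex m n).

Definition R (a b : V) := (a == b) || htg_adj l a b.

Fixpoint compress (p : V) (q : seq V) : seq V :=
  if q is y :: q' then (if y == p then compress p q' else y :: compress y q') else [::].

Lemma compress_ok p q : path R p q ->
  [/\ path (htg_adj l) p (compress p q), last p (compress p q) = last p q &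
     (size (compress p q) <= size q)%N].
Proof.
elim: q p => [|y q IH] p //= /andP[hr hq].
case: eqP => [<-|hne].
  by have [h1 h2 h3] := IH y hq; split => //; apply: leqW.
have [h1 h2 h3] := IH y hq.
split => /=.
 2: done. 2: done.
rewrite h1 andbT; move: hr; rewrite /R; case: eqP => //= e; by rewrite e in hne.
Qed.

Lemma flat_row i (a b : V) : flat_edge i a b -> a.2 = b.2.
Proof.
rewrite /flat_edge /flat_edge_dir /Defs.row => /orP[]/and5P[_ _ _ /eqP [h] _];
 apply/val_inj => //=.
Qed.

Lemma flat_cols i (a b : V) : flat_edge i a b ->
  ((Defs.col a == i) && (Defs.col b == i.+1)) || ((Defs.col b == i) && (Defs.col a == i.+1)).
Proof.
by rewrite /flat_edge /flat_edge_dir => /orP[]/and5P[-> -> _ _ _]; rewrite ?orbT.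
Qed.

Lemma side_pres i (a b : V) : htg_adj l a b -> ~~ flat_edge i a b -> ~~ jump_edge l a b ->
  (Defs.col a <= i)%N = (Defs.col b <= i)%N.
Proof.
rewrite /htg_adj => /orP[/orP[|/existsP[j hj]]|hj] //.
- by move=> /andP[/eqP -> _].
- move=> nf _; have hji : (j:nat) != i by apply: contraNneq nf => <-.
  move: hj; rewrite /flat_edge /flat_edge_dir => /orP[]/and5P[/eqP-> /eqP-> _ _ _]; lia.
- by rewrite hj.
Qed.

Lemma proj_step c (a b : V) : htg_adj l a b -> ~~ jump_edge l a b ->
  R ((c, a.2) : V) (c, b.2).
Proof.
rewrite /R /htg_adj => /orP[/orP[|/existsP[j hj]]|hj] //.
- move=> /andP[_ h] _; apply/orP; right; apply/orP; left; apply/orP; left.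
  by rewrite /vertical_edge eqxx; exact h.
- by move=> _; rewrite (flat_row hj) eqxx.
- by rewrite hj.
Qed.

Lemma core (x : V) s i k1 k2 : shortest_path l x s -> (k1 < k2)%N -> (k2 < size s)%N ->
 flat_edge i (pv x s k1) (pv x s k1.+1) -> flat_edge i (pv x s k2) (pv x s k2.+1) ->
 (forall k, (k1 < k < k2)%N -> ~~ flat_edge i (pv x s k) (pv x s k.+1)) ->
 (forall k, (k1 < k < k2)%N -> ~~ jump_edge l (pv x s k) (pv x s k.+1)) -> False.
Proof.
case=> hp _ hsh hk12 hk2 hf1 hf2 hnf hnj.
have adj : forall k, (k < size s)%N -> htg_adj l (pv x s k) (pv x s k.+1).
  by move=> k hk; have /(pathP x) := hp; apply.
have side : forall k, (k1 < k <= k2)%N ->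
    (Defs.col (pv x s k) <= i)%N = (Defs.col (pv x s k1.+1) <= i)%N.
  elim=> [|k IH] hk; first lia.
  have [->|hne] := eqVneq k k1; first done.
  rewrite -IH; last lia.
  symmetry; apply: side_pres; [apply adj; lia | apply hnf; lia | apply hnj; lia].
have hc : (pv x s k2.+1).1 = (pv x s k1).1.
  apply: val_inj => /=.
  have := side k2 ltac:(lia).
  move: (flat_cols hf1) (flat_cols hf2); rewrite /Defs.col.
  move=> /orP[]/andP[/eqP -> /eqP ->] /orP[]/andP[/eqP -> /eqP ->]; lia.
pose c := (pv x s k1).1.
pose pr (a : V) : V := (c, a.2).
have pr1 : pr (pv x s k1.+1) = pv x s k1.
  by rewrite /pr -(flat_row hf1) /c; case: (pv x s k1).
have pr2 : pr (pv x s k2) = pv x s k2.+1.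
  by rewrite /pr (flat_row hf2) /c -hc; case: (pv x s k2.+1).
pose f j := if (j <= k1)%N then pv x s j else if (j <= k2)%N then pr (pv x s j) else pv x s j.+1.
pose t := mkseq (fun j => f j.+1) (size s).-1.
have ht : forall j, (j <= (size s).-1)%N -> nth x (x :: t) j = f j.
  case=> [|j] hj /=; first by rewrite /f leq0n.
  by rewrite nth_mkseq.
have hR : path R x t.
  apply/(pathP x) => j; rewrite size_mkseq => hj.
  change (R (nth x (x :: t) j) (nth x (x :: t) j.+1)).
  rewrite !ht; [|lia|lia].
  rewrite /f.
  case: (leqP j k1) => h1; case: (leqP j.+1 k1) => h2; case: (leqP j k2) => h3;
  case: (leqP j.+1 k2) => h4; try (exfalso; lia);
  first [ by rewrite /R adj ?orbT //; lia
        | (have e : j = k1 by lia); by rewrite e pr1 /R eqxx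
        | apply: proj_step; [apply adj; lia | apply hnj; lia]
        | (have e : j = k2 by lia); by rewrite e pr2 /R adj ?orbT //; lia
        | idtac ].
  all: idtac.
have hlast : last x t = last x s.
  rewrite (last_nth x) size_mkseq ht // (last_nth x) /f.
  case: (leqP (size s).-1 k1) => h1; first lia.
  case: (leqP (size s).-1 k2) => h2; last by rewrite prednK //; lia.
  have e : (size s).-1 = k2 by lia.
  by rewrite e pr2; congr (pv x s _); lia.
have [hc1 hc2 hc3] := compress_ok hR.
have := hsh _ hc1 (etrans hc2 hlast).
move: hc3; rewrite size_mkseq; lia.
Qed.
End H.

Theorem lemma6p2 (m n : nat) (l : int) (x : htg_vertex m n) (s : seq (htg_vertex m n)) :
  htg_params m n l ->
  shortest_path l x s ->
  (forall (i k1 k2 : nat), (i.+1 < m)%N -> (k1 < k2)%N -> (k2 < size s)%N ->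
     flat_edge i (pv x s k1) (pv x s k1.+1) ->
     flat_edge i (pv x s k2) (pv x s k2.+1) ->
     (forall k, (k1 < k < k2)%N -> ~~ flat_edge i (pv x s k) (pv x s k.+1)) ->
     exists k, (k1 < k < k2)%N /\ jump_edge l (pv x s k) (pv x s k.+1))
  /\
  ((forall k, (k < size s)%N -> ~~ jump_edge l (pv x s k) (pv x s k.+1)) ->
   forall (i k1 k2 : nat), (i.+1 < m)%N -> (k1 < size s)%N -> (k2 < size s)%N ->
     flat_edge i (pv x s k1) (pv x s k1.+1) ->
     flat_edge i (pv x s k2) (pv x s k2.+1) -> k1 = k2).
Proof.
move=> _ hsp; split.
- move=> i k1 k2 _ h12 h2 f1 f2 nf.
  case hb: (has (fun k => jump_edge l (pv x s k) (pv x s k.+1)) (iota k1.+1 (k2 - k1.+1))).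
  + move/hasP: hb => [k]; rewrite mem_iota => hk hj; exists k; split => //; lia.
  + exfalso; apply: (core hsp h12 h2 f1 f2 nf) => k hk.
    move/hasPn: hb; apply; rewrite mem_iota; lia.
- move=> nj i k1 k2 _ h1 h2 f1 f2.
  wlog: k1 k2 h1 h2 f1 f2 / (k1 <= k2)%N.
    move=> H; case: (leqP k1 k2) => h; first exact: H.
    by symmetry; apply: H => //; apply: ltnW.
  rewrite leq_eqVlt => /orP[/eqP//|hlt]; exfalso.
  have hex : exists k, [&& (k1 < k)%N, (k < size s)%N & flat_edge i (pv x s k) (pv x s k.+1)].
    by exists k2; rewrite hlt h2 f2.
  case: (ex_minnP hex) => k /and3P[hk1 hks hfk] hmin.
  apply: (core hsp hk1 hks f1 hfk) => k' hk'.
  + apply/negP => hf; have := hmin k'; rewrite hf andbT; lia.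
  + apply: nj; lia.
Qed.
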